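(* In every execution of the Minimmit protocol (described in the context), every correct processor enters every view $v\in \mathbb{N}_{\geq 1}$.
   Context: Setting. There are $n$ processors $\Pi=\{p_0,\dots,p_{n-1}\}$ and an integer $f$ with $5f+1\le n$. At most $f$ processors may be corrupted by an adversary during the execution and then behave arbitrarily (Byzantine); processors never corrupted are called correct. Processors communicate over point-to-point authenticated channels; every message is signed by its sender; a PKI validates signatures and $H$ is a collision-resistant hash function; attention is restricted to executions in which the adversary cannot forge signatures or find hash collisions. Time is divided into timeslots $t\in\mathbb{N}_{\ge 0}$ (partial synchrony): a message sent at time $t$ arrives at some time $t'>t$ with $t'\le \max\{\text{GST},t\}+\Delta$, where $\Delta$ is known to the protocol and GST is unknown and chosen by the adversary (who also chooses delivery times subject to this constraint). Clocks of correct processors advance in real time. When a correct processor sends a message to all processors, it regards that message as immediately received by itself. Transactions are unique messages signed by the environment; each timeslot each processor may receive a finite set of transactions. Each processor $p_i$ maintains an append-only log $\text{log}_i$ of distinct transactions, $\text{log}_i(t)$ denoting its value at the end of timeslot $t$. Blocks. $\text{lead}(v):=p_j$ with $j=v \bmod n$. The genesis block is $b_{\text{gen}}=(0,\lambda,\lambda)$ ($\lambda$ the empty sequence). Any other block is a tuple $b=(v,\text{Tr},h)$ signed by $\text{lead}(v)$, with $v\in\mathbb{N}_{\ge1}$ ($b.\text{view}=v$, ''a view $v$ block''), $\text{Tr}=b.\text{Tr}$ a sequence of distinct transactions, and $h=b.h$ a hash value; its parent is the block $b'$ with $H(b')=h$. The ancestors of $b$ are $b$ and the ancestors of its parent ($b_{\text{gen}}$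 has only itself). To finalise $b$ means: upon obtaining all ancestors of $b$, the processor sets its log to extend the concatenation of $b'.\text{Tr}$ over ancestors $b'$ of $b$ (with duplicates removed). Messages. A vote for $b$ is $(\text{vote},b)$. An M-notarization for $b$ is a set of $2f+1$ votes for $b$ signed by distinct processors; an L-notarization for $b$ is a set of $n-f$ votes for $b$ signed by distinct processors. A nullify$(v)$ message is $(\text{nullify},v)$; a nullification for view $v$ is a set of $2f+1$ nullify$(v)$ messages signed by distinct processors. Local state of each processor: $\mathtt{S}$, the set of all received messages (automatically updated; it contains a block $b$ if it contains any message having $b$ as an entry; initially it contains only $b_{\text{gen}}$ and an M- and L-notarization for $b_{\text{gen}}$); the current view $\mathtt{v}$ (initially 1; a processor enters view $v$ when $\mathtt{v}$ becomes $v$, and enters view 1 at the start); a timer $\mathtt{T}$ (initially 0, increasing in real time, reset to 0 upon entering a new view); $\mathtt{nullified}$ (initially false) and $\mathtt{notarized}$ (initially $\bot$, a value different from every block). SelectParent$(\mathtt{S},\mathtt{v})$: let $v'<\mathtt{v}$ be greatest such that $\mathtt{S}$ contains an M-notarization for some block of view $v'$; output the lexicographically least such block. ProposeChild$(b,v)$: form a sequence Tr of distinct transactions containing all transactions received and not in $b'.\text{Tr}$ for any ancestor $b'\in\mathtt{S}$ of $b$, and send the block $(v,\text{Tr},H(b))$ to all processors. $\mathtt{S}$ contains a valid proposal $b$ for view $v$ if $\mathtt{S}$ contains (i) precisely one block of the form $b=(v,\text{Tr},h)$ signed by $\text{lead}(v)$, (ii) an M-notarization for some $b'$ with $H(b')=h$,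 say $b'.\text{view}=v'$, and (iii) a nullification for each view in the open interval $(v',v)$. At timeslot $t$ a nullification $N\subseteq\mathtt{S}$ for a view $v$ is new if $\mathtt{S}$ contained no nullification for $v$ at any earlier timeslot and $N$ is lexicographically least among nullifications for $v$ in $\mathtt{S}$; new M-notarizations and new L-notarizations for a block $b$ are defined analogously. Protocol (Minimmit): at every timeslot, correct $p_i$ does, in order: (1) send new nullifications in $\mathtt{S}$ to all processors; (2) send new M- and L-notarizations in $\mathtt{S}$ to all; (3) if $p_i=\text{lead}(\mathtt{v})$, execute ProposeChild(SelectParent$(\mathtt{S},\mathtt{v}),\mathtt{v})$; (4) if $\mathtt{S}$ contains a valid proposal $b$ for view $\mathtt{v}$ and $\mathtt{notarized}=\bot$ and $\mathtt{nullified}=$ false, set $\mathtt{notarized}:=b$ and send $(\text{vote},b)$ to all; (5) if $\mathtt{T}=2\Delta$, $\mathtt{nullified}=$ false and $\mathtt{notarized}=\bot$, set $\mathtt{nullified}:=$ true and send $(\text{nullify},\mathtt{v})$ to all; (6) if $\mathtt{S}$ contains a nullification for $\mathtt{v}$, set $\mathtt{v}:=\mathtt{v}+1$, $\mathtt{nullified}:=$ false, $\mathtt{notarized}:=\bot$; (7) if $\mathtt{S}$ contains an M-notarization for some $b$ with $b.\text{view}=\mathtt{v}$: if $\mathtt{notarized}=\bot$ and $\mathtt{nullified}=$ false send $(\text{vote},b)$ to all; then set $\mathtt{v}:=\mathtt{v}+1$, $\mathtt{nullified}:=$ false, $\mathtt{notarized}:=\bot$; (8) if $\mathtt{nullified}=$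 false, $\mathtt{notarized}\neq\bot$, and $\mathtt{S}$ contains at least $2f+1$ messages signed by distinct processors, each either $(\text{nullify},\mathtt{v})$ or $(\text{vote},b)$ for some $b$ with $b.\text{view}=\mathtt{v}$ and $b\ne\mathtt{notarized}$, then set $\mathtt{nullified}:=$ true and send $(\text{nullify},\mathtt{v})$ to all; (9) if $\mathtt{S}$ contains a new L-notarization for a block $b$, finalise $b$. *)

(* Defs.v *)
From mathcomp Require Import all_boot.

Set Implicit Arguments.
Unset Strict Implicit.
Unset Printing Implicit Defensive.

(* Blocks: (view, Tr, h).  Transactions are (unique) natural numbers, hash   *)
(* values are natural numbers; h = None encodes the empty sequence lambda    *)
(* used as the "hash" field of the genesis block.                            *)
Definition block := (nat * seq nat * option nat)%type.
Definition bview (b : block) : nat := b.1.1.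
Definition btr (b : block) : seq nat := b.1.2.
Definition bh (b : block) : option nat := b.2.
Definition bgen : block := (0, [::], None).

Definition wf_block (b : block) : bool :=
  (b == bgen) || [&& 0 < bview b, uniq (btr b) & bh b != None].

(* Atomic signed items.  Notarizations / nullifications are sets of votes /  *)
(* nullify messages; receiving or sending one is receiving or sending its    *)
(* constituent signed votes / nullify messages.                              *)
(*   Vote p b : (vote, b) signed by p                                        *)
(*   Null p v : (nullify, v) signed by p                                     *)
(*   Blk b    : the block b, signed by lead (bview b)                        *)
(*   Tx x     : transaction x (signed by the environment)                    *)
Inductive item (n : nat) : Type :=
| Vote of 'I_n & block
| Null of 'I_n & nat
| Blk of block
| Tx of nat.
Arguments Vote {n}.
Arguments Null {n}.
Arguments Blk {n}.
Arguments Tx {n}.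

Definition item_eqb n (x y : item n) : bool :=
  match x, y with
  | Vote p b, Vote q c => (p == q) && (b == c)
  | Null p v, Null q w => (p == q) && (v == w)
  | Blk b, Blk c => b == c
  | Tx a, Tx c => a == c
  | _, _ => false
  end.

Definition msgset (n : nat) := item n -> bool.
Definition mempty n : msgset n := fun _ => false.
Definition addm n (S P : msgset n) : msgset n := fun x => S x || P x.
Definition one n (x : item n) : msgset n := fun y => item_eqb x y.

Definition wf_item n (x : item n) : bool :=
  match x with
  | Vote _ b => wf_block b
  | Blk b => wf_block b
  | _ => true
  end.

(* index (as a natural number) of the processor whose signature the signed
   object o bears; lead(v) = p_(v mod n). *)
Definition signer n (o : item n) : option nat :=
  match o with
  | Vote p _ => Some (val p)
  | Null p _ => Some (val p)
  | Blk b => if 0 < bview b then Some (bview b %% n) else None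
  | Tx _ => None
  end.

Definition carries n (x o : item n) : Prop :=
  x = o \/ exists p b, x = Vote p b /\ o = Blk b.

Definition is_lead n (i : 'I_n) (v : nat) : bool := val i == v %% n.

(* S always (implicitly) contains b_gen and an M- and L-notarization for it. *)
Definition nsigners n (S : msgset n) (w : nat) : {set 'I_n} := [set p | S (Null p w)].
Definition vsigners n (S : msgset n) (b : block) : {set 'I_n} := [set p | S (Vote p b)].

Definition nullification n (f : nat) (S : msgset n) (w : nat) : bool :=
  2 * f + 1 <= #|nsigners S w|.
Definition Mnot n (f : nat) (S : msgset n) (b : block) : bool :=
  (b == bgen) || (2 * f + 1 <= #|vsigners S b|).
Definition Lnot n (f : nat) (S : msgset n) (b : block) : bool :=
  (b == bgen) || (n - f <= #|vsigners S b|).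

Definition inS n (S : msgset n) (b : block) : bool :=
  [|| b == bgen, S (Blk b) | [exists p, S (Vote p b)]].

(* lexicographically least k-subset of signers: the k smallest indices *)
Definition least_k n (k : nat) (A : {set 'I_n}) (p : 'I_n) : bool :=
  (p \in A) && (#|[set q in A | (val q < val p)%N]| < k).

(* ancestors (in S) of a block: anc H S b a  <=>  a is an ancestor of b *)
Inductive anc n (H : block -> nat) (S : msgset n) : block -> block -> Prop :=
| anc_refl b : anc H S b b
| anc_step b p a : inS S p -> bh b = Some (H p) -> anc H S p a -> anc H S b a.

Fixpoint lexle_seq (s1 s2 : seq nat) : bool :=
  match s1, s2 with
  | [::], _ => true
  | _ :: _, [::] => false
  | x :: s1', y :: s2' => (x < y) || ((x == y) && lexle_seq s1' s2')
  end.
Definition ole (a b : option nat) : bool :=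
  match a, b with
  | None, _ => true
  | Some _, None => false
  | Some x, Some y => x <= y
  end.
Definition block_le (b1 b2 : block) : bool :=
  (bview b1 < bview b2) ||
  ((bview b1 == bview b2) &&
   ((lexle_seq (btr b1) (btr b2) && ~~ lexle_seq (btr b2) (btr b1)) ||
    ((btr b1 == btr b2) && ole (bh b1) (bh b2)))).

Definition select_parent n (f : nat) (S : msgset n) (v : nat) (b : block) : Prop :=
  [/\ Mnot f S b, bview b < v,
      forall b', Mnot f S b' -> bview b' < v -> bview b' <= bview b &
      forall b', Mnot f S b' -> bview b' = bview b -> block_le b b'].

Definition valid_prop n (f : nat) (H : block -> nat) (S : msgset n) (v : nat) (b : block) : Prop :=
  [/\ inS S b, bview b = v,
      (forall b', inS S b' -> bview b' = v -> b' = b) &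
      exists b', [/\ bh b = Some (H b'), Mnot f S b' &
                     forall w, bview b' < w < v -> nullification f S w]].

(*   ctent    : timeslot at which the current view was entered (T = t-ctent)*)
(*   cnot     : notarized (None = bottom)                                    *)
(*   csent    : messages sent (to all) during the current timeslot           *)
(*   centered : views entered during the current timeslot (in order)        *)
(*   cchk     : the value of S when the "new certificate" checks of the      *)
(*              current timeslot were performed                              *)
Record cfg (n : nat) := Cfg {
  cS : msgset n; cv : nat; ctent : nat; cnull : bool; cnot : option block;
  csent : msgset n; centered : seq nat; cchk : msgset n }.

Definition init_cfg n : cfg n :=
  Cfg (@mempty n) 1 0 false None (@mempty n) [::] (@mempty n).

(* send P to all processors (and regard it as immediately received) *)
Definition send n (P : msgset n) (c : cfg n) : cfg n :=
  Cfg (addm (cS c) P) (cv c) (ctent c) (cnull c) (cnot c)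
      (addm (csent c) P) (centered c) (cchk c).
Definition set_null n (c : cfg n) : cfg n :=
  Cfg (cS c) (cv c) (ctent c) true (cnot c) (csent c) (centered c) (cchk c).
Definition set_not n (b : block) (c : cfg n) : cfg n :=
  Cfg (cS c) (cv c) (ctent c) (cnull c) (Some b) (csent c) (centered c) (cchk c).
Definition advance n (t : nat) (c : cfg n) : cfg n :=
  Cfg (cS c) (cv c).+1 t false None (csent c) (rcons (centered c) (cv c).+1) (cchk c).

(* step (1): send new nullifications; Pchk = S at the checks of the previous
   timeslot *)
Definition step1 n (f : nat) (Pchk : msgset n) (c : cfg n) : cfg n :=
  send (fun x => match x with
                 | Null p w => [&& nullification f (cS c) w, ~~ nullification f Pchk w &
                                   least_k (2 * f + 1) (nsigners (cS c) w) p]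
                 | _ => false end) c.

Definition step2 n (f : nat) (Pchk : msgset n) (c : cfg n) : cfg n :=
  send (fun x => match x with
                 | Vote p b =>
                     (b != bgen) &&
                     ([&& 2 * f + 1 <= #|vsigners (cS c) b|,
                          ~~ (2 * f + 1 <= #|vsigners Pchk b|) &
                          least_k (2 * f + 1) (vsigners (cS c) b) p] ||
                      [&& n - f <= #|vsigners (cS c) b|,
                          ~~ (n - f <= #|vsigners Pchk b|) &
                          least_k (n - f) (vsigners (cS c) b) p])
                 | _ => false end) c.

Definition step3 n (f : nat) (H : block -> nat) (i : 'I_n) (c c' : cfg n) : Prop :=
  if is_lead i (cv c) then
    exists (par : block) (Tr : seq nat),
      [/\ select_parent f (cS c) (cv c) par, uniq Tr,
          (forall x, cS c (Tx x) -> (forall a, anc H (cS c) par a -> x \notin btr a) ->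
                     x \in Tr) &
          c' = send (one (Blk (cv c, Tr, Some (H par)))) c]
  else c' = c.

Definition step4 n (f : nat) (H : block -> nat) (i : 'I_n) (c c' : cfg n) : Prop :=
  (exists b, [/\ valid_prop f H (cS c) (cv c) b, cnot c = None, cnull c = false &
                c' = set_not b (send (one (Vote i b)) c)])
  \/ ((~ exists b, valid_prop f H (cS c) (cv c) b) \/ cnot c <> None \/ cnull c = true)
     /\ c' = c.

Definition step5 n (Delta : nat) (i : 'I_n) (t : nat) (c : cfg n) : cfg n :=
  if [&& t - ctent c == 2 * Delta, ~~ cnull c & cnot c == None]
  then set_null (send (one (Null i (cv c))) c) else c.

Definition step6 n (f : nat) (t : nat) (c : cfg n) : cfg n :=
  if nullification f (cS c) (cv c) then advance t c else c.

Definition step7 n (f : nat) (i : 'I_n) (t : nat) (c c' : cfg n) : Prop :=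
  (exists b, [/\ Mnot f (cS c) b, bview b = cv c &
     c' = advance t (if (cnot c == None) && ~~ cnull c
                     then send (one (Vote i b)) c else c)])
  \/ ((forall b, Mnot f (cS c) b -> bview b <> cv c) /\ c' = c).

Definition step8_cond n (f : nat) (c : cfg n) : Prop :=
  [/\ cnull c = false, cnot c <> None &
      exists P : {set 'I_n}, 2 * f + 1 <= #|P| /\
        forall p, p \in P ->
          cS c (Null p (cv c)) \/
          exists b, [/\ bview b = cv c, Some b <> cnot c & cS c (Vote p b)]].
Definition step8 n (f : nat) (i : 'I_n) (c c' : cfg n) : Prop :=
  (step8_cond f c /\ c' = set_null (send (one (Null i (cv c))) c))
  \/ (~ step8_cond f c /\ c' = c).

(* Step (9) (finalisation) only updates the log and sends nothing; it has no
   influence on views, so it is not modelled. *)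

Definition slot n (f Delta : nat) (H : block -> nat) (i : 'I_n) (t : nat)
    (prev : cfg n) (inbox : msgset n) (cur : cfg n) : Prop :=
  let S0 := addm (cS prev) inbox in
  let c0 := Cfg S0 (cv prev) (ctent prev) (cnull prev) (cnot prev) (@mempty n) [::] S0 in
  let c2 := step2 f (cchk prev) (step1 f (cchk prev) c0) in
  exists c3 c4 c7,
    [/\ step3 f H i c2 c3, step4 f H i c3 c4,
        step7 f i t (step6 f t (step5 Delta i t c4)) c7 & step8 f i c7 cur].

Definition prev_cfg n (st : 'I_n -> nat -> cfg n) (i : 'I_n) (t : nat) : cfg n :=
  if t is t'.+1 then st i t' else @init_cfg n.

(* Executions.  inbox i t = messages arriving at processor i at timeslot t; *)
(* st i t = configuration of i at the end of timeslot t.                     *)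
Definition execution n (f Delta GST : nat) (H : block -> nat) (correct : pred 'I_n)
    (inbox : 'I_n -> nat -> msgset n) (st : 'I_n -> nat -> cfg n) : Prop :=
  (forall i t, correct i -> slot f Delta H i t (prev_cfg st i t) (inbox i t) (st i t)) /\
  [/\
      (forall i t, correct i -> exists s : seq (item n), forall x, inbox i t x -> has (item_eqb x) s),
      (forall i t x, correct i -> inbox i t x -> wf_item x),
      (forall i j t x, correct i -> correct j -> i != j -> csent (st i t) x ->
         exists t', t < t' <= maxn GST t + Delta /\ inbox j t' x),
      (forall j t x o (p : 'I_n), correct j -> inbox j t x -> carries x o ->
         signer o = Some (val p) -> correct p ->
         exists t0 y, [/\ t0 < t, csent (st p t0) y & carries y o]) &
      (forall i j t t' b b', correct i -> correct j ->
         inS (cS (st i t)) b -> inS (cS (st j t')) b' -> H b = H b' -> b = b')].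

Definition enters n (st : 'I_n -> nat -> cfg n) (i : 'I_n) (v : nat) : Prop :=
  v = 1 \/ exists t, v \in centered (st i t).

(* Main.v *)
Require Import Defs.
From mathcomp Require Import all_boot.
From Stdlib Require Import Classical.
From mathcomp Require Import zify.

Set Implicit Arguments.
Unset Strict Implicit.
Unset Printing Implicit Defensive.

Definition sub n (S S' : msgset n) := forall x, S x -> S' x.

Section Steps.
Variables (n f Delta : nat) (H : block -> nat) (i : 'I_n) (t : nat).

Record base (c c' : cfg n) : Prop := Base {
  b_S : sub (cS c) (cS c');
  b_sent : sub (csent c) (csent c');
  b_chk : cchk c' = cchk c;
  b_inv : sub (csent c) (cS c) -> sub (csent c') (cS c') }.

Record RNA (c c' : cfg n) : Prop := MkRNA {
  na_base : base c c';
  na_v : cv c' = cv c;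
  na_tent : ctent c' = ctent c;
  na_ent : centered c' = centered c;
  na_null : cnull c -> cnull c';
  na_not : forall b, cnot c = Some b -> cnot c' = Some b;
  na_null' : cnull c' -> cnull c \/ csent c' (Null i (cv c));
  na_not' : forall b, cnot c' = Some b -> cnot c = Some b \/ (csent c' (Vote i b) /\ bview b = cv c) }.

Record RADV (c c' : cfg n) : Prop := MkRADV {
  ad_base : base c c';
  ad_v : cv c' = (cv c).+1;
  ad_tent : ctent c' = t;
  ad_ent : centered c' = rcons (centered c) (cv c).+1;
  ad_null : cnull c' = false;
  ad_not : cnot c' = None }.

Definition Rstep c c' := RNA c c' \/ RADV c c'.

Record SR (c c' : cfg n) : Prop := MkSR {
  sr_base : base c c';
  sr_v : cv c <= cv c';
  sr_ent : forall w, w \in centered c -> w \in centered c';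
  sr_ent' : forall w, cv c < w <= cv c' -> w \in centered c';
  sr_same : cv c' = cv c -> [/\ ctent c' = ctent c, (cnull c -> cnull c'),
       (forall b, cnot c = Some b -> cnot c' = Some b),
       (cnull c' -> cnull c \/ csent c' (Null i (cv c))) &
       (forall b, cnot c' = Some b -> cnot c = Some b \/ (csent c' (Vote i b) /\ bview b = cv c))];
  sr_diff : cv c' <> cv c -> [/\ ctent c' = t, (cnull c' -> csent c' (Null i (cv c'))) &
       (forall b, cnot c' = Some b -> csent c' (Vote i b) /\ bview b = cv c')] }.

Lemma base_refl c : base c c.
Proof. by split. Qed.

Lemma base_trans c1 c2 c3 : base c1 c2 -> base c2 c3 -> base c1 c3.
Proof.
case=> h1 h2 h3 h4 [k1 k2 k3 k4]; split.
- by move=> x /h1 /k1.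
- by move=> x /h2 /k2.
- by rewrite k3 h3.
- by move=> /h4 /k4.
Qed.

Lemma base_send P c : base c (send P c).
Proof.
split => //=; rewrite /addm.
- by move=> x ->.
- by move=> x ->.
- move=> h x /orP [/h -> //| ->]; by rewrite orbT.
Qed.

Lemma RNA_refl c : RNA c c.
Proof.
split => //; first exact: base_refl.
- by left.
- by move=> b ->; left.
Qed.

Lemma RNA_send P c : RNA c (send P c).
Proof.
split => //; first exact: base_send.
- by left.
- by move=> b /= ->; left.
Qed.

Lemma RNA_trans c1 c2 c3 : RNA c1 c2 -> RNA c2 c3 -> RNA c1 c3.
Proof.
case=> h1 h2 h3 h4 h5 h6 h7 h8 [k1 k2 k3 k4 k5 k6 k7 k8]; split.
- exact: base_trans h1 k1.
- by rewrite k2.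
- by rewrite k3.
- by rewrite k4.
- by move/h5/k5.
- by move=> b /h6/k6.
- move/k7 => [/h7 [->|h]|h]; [by left| right; exact: (b_sent k1) | by right; rewrite -h2].
- move=> b /k8 [/h8 [->|[h h']]|[h h']]; [by left| right; split => //; exact: (b_sent k1) | by right; rewrite -h2].
Qed.

Lemma RADV_adv c : RADV c (advance t c).
Proof. by split => //; split => //=; move=> x. Qed.

Lemma RADV_adv_send P c : RADV c (advance t (send P c)).
Proof. by split => //; case: (base_send P c) => *; split. Qed.

Lemma SR_refl c : SR c c.
Proof.
split => //; first exact: base_refl.
- move=> w /andP [h1 h2]; by have := leq_trans h1 h2; rewrite ltnn.
- move=> _; split => //; [by left | by move=> b ->; left].
Qed.

Lemma SR_step c c1 c2 : SR c c1 -> Rstep c1 c2 -> SR c c2.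
Proof.
move=> [s1 s2 s3 s4 s5 s6] [[k1 k2 k3 k4 k5 k6 k7 k8]|[k1 k2 k3 k4 k5 k6]].
- split.
  + exact: base_trans s1 k1.
  + by rewrite k2.
  + by move=> w /s3; rewrite k4.
  + by rewrite k2 k4.
  + rewrite k2 => /[dup] e /s5 [e1 e2 e3 e4 e5]; split.
    * by rewrite k3.
    * by move/e2/k5.
    * by move=> b /e3/k6.
    * move/k7 => [/e4 [->|h]|h]; [by left| right; exact: (b_sent k1) | by right; rewrite e in h].
    * move=> b /k8 [/e5 [->|[h h']]|[h h']]; [by left| right; split => //; exact: (b_sent k1) | by right; rewrite -e].
  + rewrite k2 => /[dup] e /s6 [e1 e2 e3]; split.
    * by rewrite k3.
    * by move/k7 => [/e2 h|h]; [exact: (b_sent k1)|].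
    * by move=> b /k8 [/e3 [h h']|[h h']]; split => //; exact: (b_sent k1).
- split.
  + exact: base_trans s1 k1.
  + by rewrite k2 (leq_trans s2).
  + by move=> w /s3; rewrite k4 mem_rcons inE => ->; rewrite orbT.
  + move=> w; rewrite k2 k4 mem_rcons inE => /andP [h1]; rewrite leq_eqVlt ltnS => /orP [->//|h2].
    by rewrite s4 ?orbT // h1 h2.
  + by rewrite k2 => e; move: s2; rewrite -e ltnn.
  + move=> _; split => //; by rewrite ?k5 ?k6.
Qed.

Lemma RNA_SR c c' : RNA c c' -> SR c c'.
Proof. by move=> h; apply: SR_step (SR_refl c) _; left. Qed.

Lemma step1_RNA Pchk c : RNA c (step1 f Pchk c).
Proof. exact: RNA_send. Qed.

Lemma step2_RNA Pchk c : RNA c (step2 f Pchk c).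
Proof. exact: RNA_send. Qed.

Lemma step3_RNA c c' : step3 f H i c c' -> RNA c c'.
Proof.
rewrite /step3; case: ifP => _; last by move->; exact: RNA_refl.
by case=> par [Tr [_ _ _ ->]]; exact: RNA_send.
Qed.

Lemma step4_RNA c c' : step4 f H i c c' -> RNA c c'.
Proof.
case=> [[b [h1 h2 h3 ->]]|[_ ->]]; last exact: RNA_refl.
case: h1 => _ hv _ _.
split => //=.
- by case: (base_send (Defs.one (Vote i b)) c) => *; split.
- by rewrite h2.
- by left.
- move=> b' [<-]; right; split => //; by rewrite /addm /Defs.one /= !eqxx orbT.
Qed.

Lemma RNA_null c : RNA c (set_null (send (Defs.one (Null i (cv c))) c)).
Proof.
split => //=.
- by case: (base_send (Defs.one (Null i (cv c))) c) => *; split.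
- by move=> _; right; rewrite /addm /Defs.one /= !eqxx orbT.
- by move=> b ->; left.
Qed.

Lemma step5_RNA c : RNA c (step5 Delta i t c).
Proof.
rewrite /step5; case: ifP => _; [exact: RNA_null | exact: RNA_refl].
Qed.

Lemma step6_R c : Rstep c (step6 f t c).
Proof.
rewrite /step6; case: ifP => _; [right; exact: RADV_adv | left; exact: RNA_refl].
Qed.

Lemma step7_R c c' : step7 f i t c c' -> Rstep c c'.
Proof.
case=> [[b [_ _ ->]]|[_ ->]]; last by left; exact: RNA_refl.
right; case: ifP => _; [exact: RADV_adv_send | exact: RADV_adv].
Qed.

Lemma step8_RNA c c' : step8 f i c c' -> RNA c c'.
Proof. case=> [[_ ->]|[_ ->]]; [exact: RNA_null | exact: RNA_refl]. Qed.

End Steps.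


Definition S0of n (prev : cfg n) (inbox : msgset n) := addm (cS prev) inbox.
Definition c0of n (prev : cfg n) (inbox : msgset n) :=
  let S0 := S0of prev inbox in
  Cfg S0 (cv prev) (ctent prev) (cnull prev) (cnot prev) (@mempty n) [::] S0.

Definition flag n (c : cfg n) : Prop := cnull c = true \/ exists b, cnot c = Some b.

Definition Pv n f (S : msgset n) v : Prop :=
  nullification f S v \/ exists b, Mnot f S b /\ bview b = v.

Lemma nsigners_sub n (S S' : msgset n) w : sub S S' -> nsigners S w \subset nsigners S' w.
Proof. by move=> h; apply/subsetP => p; rewrite !inE => /h. Qed.

Lemma vsigners_sub n (S S' : msgset n) b : sub S S' -> vsigners S b \subset vsigners S' b.
Proof. by move=> h; apply/subsetP => p; rewrite !inE => /h. Qed.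

Lemma null_mono n f (S S' : msgset n) w : sub S S' -> nullification f S w -> nullification f S' w.
Proof. move=> h; rewrite /nullification => /leq_trans; apply; exact/subset_leq_card/nsigners_sub. Qed.

Lemma Mnot_mono n f (S S' : msgset n) b : sub S S' -> Mnot f S b -> Mnot f S' b.
Proof.
move=> h; rewrite /Mnot => /orP [->//|h2]; apply/orP; right.
apply: leq_trans h2 _; exact/subset_leq_card/vsigners_sub.
Qed.

Lemma Pv_mono n f (S S' : msgset n) v : sub S S' -> Pv f S v -> Pv f S' v.
Proof.
move=> h [h1|[b [h1 h2]]]; [left; exact: null_mono h1| right; exists b; split => //; exact: Mnot_mono h1].
Qed.

Section Slot.
Variables (n f Delta : nat) (H : block -> nat) (i : 'I_n) (t : nat).
Variables (prev : cfg n) (inbox : msgset n) (cur : cfg n).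
Hypothesis hs : slot f Delta H i t prev inbox cur.

Local Notation S0 := (S0of prev inbox).
Local Notation c0 := (c0of prev inbox).

Lemma slot_parts : exists c4 c7,
  [/\ RNA i c0 c4, RNA i (step1 f (cchk prev) c0) c4,
      RNA i (step2 f (cchk prev) (step1 f (cchk prev) c0)) c4,
      step7 f i t (step6 f t (step5 Delta i t c4)) c7 & step8 f i c7 cur].
Proof.
case: hs => c3 [c4 [c7 [h3 h4 h7 h8]]]; exists c4, c7; split => //.
- apply: RNA_trans (step1_RNA _ _ _ _) _.
  apply: RNA_trans (step2_RNA _ _ _ _) _.
  apply: RNA_trans (step3_RNA h3) _; exact: step4_RNA h4.
- apply: RNA_trans (step2_RNA _ _ _ _) _.
  apply: RNA_trans (step3_RNA h3) _; exact: step4_RNA h4.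
- apply: RNA_trans (step3_RNA h3) _; exact: step4_RNA h4.
Qed.

Lemma slot_tail c4 c7 a : step7 f i t (step6 f t (step5 Delta i t c4)) c7 -> step8 f i c7 cur ->
  SR i t a (step5 Delta i t c4) -> SR i t a cur.
Proof.
move=> h7 h8 h; apply: SR_step (SR_step (SR_step h (step6_R _ _ _ _)) (step7_R h7)) _.
by left; exact: step8_RNA h8.
Qed.

Lemma slot_SR : SR i t c0 cur.
Proof.
have [c4 [c7 [h1 _ _ h7 h8]]] := slot_parts.
apply: slot_tail h7 h8 _; apply: RNA_SR; apply: RNA_trans h1 _; exact: step5_RNA.
Qed.

Lemma slot_S0 : sub S0 (cS cur).
Proof. exact: b_S (sr_base slot_SR). Qed.

Lemma slot_Sprev : sub (cS prev) (cS cur).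
Proof. move=> x h; apply: slot_S0; by rewrite /S0of /addm h. Qed.

Lemma slot_chk : cchk cur = S0.
Proof. exact: b_chk (sr_base slot_SR). Qed.

Lemma slot_inv : sub (csent cur) (cS cur).
Proof. by apply: (b_inv (sr_base slot_SR)). Qed.

Lemma slot_v : cv prev <= cv cur.
Proof. exact: sr_v slot_SR. Qed.

Lemma slot_ent w : cv prev < w <= cv cur -> w \in centered cur.
Proof. move=> h; exact: (sr_ent' slot_SR h). Qed.

Lemma slot_same : cv cur = cv prev -> [/\ ctent cur = ctent prev, (cnull prev -> cnull cur),
       (forall b, cnot prev = Some b -> cnot cur = Some b),
       (cnull cur -> cnull prev \/ csent cur (Null i (cv prev))) &
       (forall b, cnot cur = Some b -> cnot prev = Some b \/ (csent cur (Vote i b) /\ bview b = cv prev))].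
Proof. exact: sr_same slot_SR. Qed.

Lemma slot_diff : cv cur <> cv prev -> [/\ ctent cur = t, (cnull cur -> csent cur (Null i (cv cur))) &
       (forall b, cnot cur = Some b -> csent cur (Vote i b) /\ bview b = cv cur)].
Proof. exact: sr_diff slot_SR. Qed.


Lemma Rstep_v c c' : Rstep i t c c' -> cv c <= cv c'.
Proof. by case=> [[_ -> _ _ _ _ _ _]|[_ -> _ _ _ _]]. Qed.

Lemma RNA_flag c c' : RNA i c c' -> flag c -> flag c'.
Proof.
case=> _ _ _ _ h1 h2 _ _ [h|[b h]]; [left; exact: h1 h| right; exists b; exact: h2 _ h].
Qed.

Lemma cv_step7 c c' : step7 f i t c c' -> (cv c' = cv c /\ c' = c) \/
   (cv c' = (cv c).+1 /\ exists b, Mnot f (cS c) b /\ bview b = cv c).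
Proof.
case=> [[b [h1 h2 ->]]|[_ ->]]; last by left.
right; split; last by exists b.
by case: ifP.
Qed.

Lemma step6_cases (c : cfg n) : (nullification f (cS c) (cv c) /\ step6 f t c = advance t c) \/
   (~~ nullification f (cS c) (cv c) /\ step6 f t c = c).
Proof. by rewrite /step6; case: ifP => h; [left|right]; rewrite ?h. Qed.

Lemma slot_progress v : cv prev = v -> Pv f (cS prev) v -> v < cv cur.
Proof.
move=> ev hP.
have [c4 [c7 [h1 _ _ h7 h8]]] := slot_parts.
set c5 := step5 Delta i t c4.
have r5 := RNA_trans h1 (step5_RNA Delta i t c4).
have e5 : cv c5 = v by rewrite (na_v r5).
have s5 : sub (cS prev) (cS c5).
  by move=> x hx; apply: (b_S (na_base r5)); rewrite /= /S0of /addm hx.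
rewrite (na_v (step8_RNA h8)).
have := Rstep_v (step7_R h7).
case: (cv_step7 h7) => [[e _]|[-> _]] _; last first.
  by case: (step6_cases c5) => [[_ ->]|[_ ->]] /=; rewrite e5.
case: (step6_cases c5) => [[_ e6]|[hn e6]]; first by rewrite e e6 /= e5.
case: hP => [hN|[b [hb1 hb2]]].
  by move: hn; rewrite e5 (null_mono s5 hN).
rewrite e6 in h7.
case: (cv_step7 h7) => [[_ _]|[-> _]]; last by rewrite e5.
case: h7 => [[b' [_ _ e']]|[hall _]].
  by move: e; rewrite e6 e' /=; case: ifP => _ /= /esym /n_Sn.
by case: (hall b); [exact: Mnot_mono hb1| rewrite e5].
Qed.

Lemma slot_advcond w : cv prev <= w < cv cur -> Pv f (cS cur) w.
Proof.
have [c4 [c7 [h1 _ _ h7 h8]]] := slot_parts.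
set c5 := step5 Delta i t c4.
set c6 := step6 f t c5.
have r5 := RNA_trans h1 (step5_RNA Delta i t c4).
have e5 : cv c5 = cv prev by rewrite (na_v r5).
have sr6 : SR i t c6 cur.
  apply: SR_step (SR_step (SR_refl _ _ c6) (step7_R h7)) _; left; exact: step8_RNA h8.
have sr5 : SR i t c5 cur by apply: slot_tail h7 h8 (SR_refl _ _ _).
have ecur : cv cur = cv c7 by rewrite (na_v (step8_RNA h8)).
move=> /andP [hw1 hw2].
have H6 : cv c6 <= w -> Pv f (cS cur) w.
  move=> hw; case: (cv_step7 h7) => [[e _]|[e [b [hb1 hb2]]]].
    by move: hw2; rewrite ecur e => hlt; move: (leq_ltn_trans hw hlt); rewrite ltnn.
  move: hw2; rewrite ecur e ltnS => hw'.
  have -> : w = cv c6 by apply/eqP; rewrite eqn_leq hw' hw.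
  right; exists b; split => //; exact: Mnot_mono (b_S (sr_base sr6)) hb1.
case: (leqP (cv c6) w) => [|hlt]; first exact: H6.
move: hlt; rewrite /c6; case: (step6_cases c5) => [[hn ->]|[_ ->]] /=; last first.
  by rewrite e5 => hlt; move: (leq_ltn_trans hw1 hlt); rewrite ltnn.
rewrite e5 ltnS => hw'.
have -> : w = cv prev by apply/eqP; rewrite eqn_leq hw' hw1.
left; rewrite -e5; exact: null_mono (b_S (sr_base sr5)) hn.
Qed.

Lemma slot_sent1 w p : nullification f S0 w -> ~~ nullification f (cchk prev) w ->
  least_k (2 * f + 1) (nsigners S0 w) p -> csent cur (Null p w).
Proof.
move=> a1 a2 a3.
have [c4 [c7 [_ h2 _ h7 h8]]] := slot_parts.
have sr := slot_tail h7 h8 (RNA_SR t (RNA_trans h2 (step5_RNA Delta i t c4))).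
apply: (b_sent (sr_base sr)); rewrite /= /addm /mempty /=.
by rewrite a1 a2 a3.
Qed.

Lemma slot_sent2 b p : b != bgen -> 2 * f + 1 <= #|vsigners S0 b| ->
  ~~ (2 * f + 1 <= #|vsigners (cchk prev) b|) ->
  least_k (2 * f + 1) (vsigners S0 b) p -> csent cur (Vote p b).
Proof.
move=> a0 a1 a2 a3.
have [c4 [c7 [_ _ h2 h7 h8]]] := slot_parts.
have sr := slot_tail h7 h8 (RNA_SR t (RNA_trans h2 (step5_RNA Delta i t c4))).
apply: (b_sent (sr_base sr)).
have E : vsigners (cS (step1 f (cchk prev) c0)) b = vsigners S0 b.
  by apply/setP => q; rewrite !inE /= /addm orbF.
rewrite /= /addm /mempty /= E.
by rewrite a0 a1 a2 a3.
Qed.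

Lemma slot_timer : 0 < Delta -> ctent prev <= t -> (2 * Delta < t - ctent prev -> flag prev) ->
  ctent cur <= t /\ (2 * Delta <= t - ctent cur -> flag cur).
Proof.
move=> hD a1 a2.
have [c4 [c7 [h1 _ _ h7 h8]]] := slot_parts.
set c5 := step5 Delta i t c4.
have sr5 : SR i t c5 cur by apply: slot_tail h7 h8 (SR_refl _ _ _).
have e4 : ctent c4 = ctent prev by rewrite (na_tent h1).
have f5 : 2 * Delta <= t - ctent c5 -> flag c5.
  rewrite /c5 /step5; case: ifP => [_ _|].
    by left.
  rewrite e4 => hc; rewrite leq_eqVlt => /orP [/eqP e|hlt].
    move: hc; rewrite -e eqxx /=.
    case hn: (cnull c4); first by left.
    by case ho: (cnot c4) => [b|//]; right; exists b.
  by apply: (RNA_flag h1); apply: a2.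
case: (eqVneq (cv cur) (cv c5)) => [e|ne].
- have [t1 t2 t3 _ _] := sr_same sr5 e.
  have ht : ctent c5 = ctent prev by rewrite /c5 /step5; case: ifP.
  split; first by rewrite t1 ht.
  rewrite t1 => /f5 [h|[b h]]; [left; exact: t2| right; exists b; exact: t3].
- have [t1 _ _] := sr_diff sr5 (elimN eqP ne).
  rewrite t1 subnn leqn0 muln_eq0 /=; split => //.
  by move=> /eqP e; move: hD; rewrite e.
Qed.

Lemma slot_step8 b (P : {set 'I_n}) : cv cur = cv prev -> cnot prev = Some b ->
  2 * f + 1 <= #|P| ->
  (forall p, p \in P -> cS prev (Null p (cv prev)) \/
     exists b', [/\ bview b' = cv prev, b' <> b & cS prev (Vote p b')]) ->
  cnull cur.
Proof.
move=> ev hb hP hall.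
have [c4 [c7 [h1 _ _ h7 h8]]] := slot_parts.
have sr7 : SR i t c0 c7.
  apply: SR_step (SR_step (RNA_SR t (RNA_trans h1 (step5_RNA Delta i t c4))) (step6_R _ _ _ _)) (step7_R h7).
have r8 := step8_RNA h8.
have e7 : cv c7 = cv prev.
  apply/eqP; rewrite eqn_leq -{1}ev (na_v r8) leqnn /=; exact: (sr_v sr7).
have [_ _ h3 _ _] := sr_same sr7 e7.
have hb7 : cnot c7 = Some b by apply: h3.
have sub7 : sub (cS prev) (cS c7).
  by move=> x hx; apply: (b_S (sr_base sr7)); rewrite /= /S0of /addm hx.
case hn: (cnull c7); first by apply: (na_null r8).
case: h8 => [[_ ->]//|[hc _]]; exfalso; apply: hc; split => //; first by rewrite hb7.
exists P; split => // p /hall [h|[b' [x1 x2 x3]]].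
  by left; rewrite e7; apply: sub7.
right; exists b'; split; [by rewrite e7 | by rewrite hb7 => [[]] | exact: sub7].
Qed.

End Slot.

Lemma least_k_card_aux n m : forall (A : {set 'I_n}) k, #|A| = m -> k <= m ->
  k <= #|[set p | least_k k A p]|.
Proof.
elim: m => [|m IH] A k hA hk.
  by move: hk; rewrite leqn0 => /eqP ->.
case: (leqP k m) => hkm; last first.
  have ek : k = m.+1 by apply/eqP; rewrite eqn_leq hk hkm.
  subst k; rewrite -{1}hA; apply: subset_leq_card; apply/subsetP => p hp.
  rewrite inE /least_k hp /= -hA; apply: proper_card.
  apply/properP; split; first by apply/subsetP => q; rewrite inE => /andP [].
  by exists p => //; rewrite inE hp ltnn.
have [p0 hp0] : exists p0, p0 \in A.
  by apply/set0Pn; rewrite -card_gt0 hA.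
case: (arg_maxnP (fun q : 'I_n => val q) hp0) => m0 hm0 hmax.
have hm0' : (m0 \in A) = true by [].
have hA' : #|A :\ m0| = m by move: hA; rewrite (cardsD1 m0) hm0' add1n => [[]].
apply: leq_trans (IH _ _ hA' hkm) _.
apply: subset_leq_card; apply/subsetP => p; rewrite !inE /least_k !inE => /andP [/andP [hne hp] hr].
rewrite hp /=; apply: leq_ltn_trans hr; apply: subset_leq_card; apply/subsetP => q.
rewrite !inE => /andP [hq hlt]; rewrite hq hlt /= ?andbT.
apply/eqP => eq; move: hlt; rewrite eq => hlt.
move/(_ p hp): hmax => h; have := leq_trans hlt h; by rewrite ltnn.
Qed.

Lemma least_k_card n k (A : {set 'I_n}) : k <= #|A| -> k <= #|[set p | least_k k A p]|.
Proof. exact: least_k_card_aux. Qed.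

Section Exec.
Variables (n f Delta GST : nat) (H : block -> nat) (correct : pred 'I_n).
Variables (inbox : 'I_n -> nat -> msgset n) (st : 'I_n -> nat -> cfg n).
Hypotheses (hn : 5 * f + 1 <= n) (hD : 0 < Delta) (hf : #|[set p | ~~ correct p]| <= f).
Hypothesis hex : execution f Delta GST H correct inbox st.

Lemma hslot i t : correct i -> slot f Delta H i t (prev_cfg st i t) (inbox i t) (st i t).
Proof. by move=> ci; case: hex => h _; apply: h. Qed.

Lemma mono_S i t t' : correct i -> t <= t' -> sub (cS (st i t)) (cS (st i t')).
Proof.
move=> ci; elim: t' => [|t' IH]; rewrite leq_eqVlt => /orP [/eqP->|h] //.
move=> x /(IH h); exact: (slot_Sprev (hslot t'.+1 ci)).
Qed.

Lemma mono_v i t t' : correct i -> t <= t' -> cv (st i t) <= cv (st i t').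
Proof.
move=> ci; elim: t' => [|t' IH]; rewrite leq_eqVlt => /orP [/eqP->|h] //.
apply: leq_trans (IH h) _; exact: (slot_v (hslot t'.+1 ci)).
Qed.

Lemma cv_pos i t : correct i -> 1 <= cv (st i t).
Proof.
move=> ci; apply: leq_trans (mono_v ci (leq0n t)).
exact: (slot_v (hslot 0 ci)).
Qed.

Lemma deliver i j s x T : correct i -> correct j -> csent (st i s) x ->
  maxn GST s + Delta <= T -> cS (st j T) x.
Proof.
move=> ci cj hx hT.
case: (eqVneq i j) => [<-|ne].
  apply: (mono_S ci _ (slot_inv (hslot s ci) hx)).
  apply: leq_trans hT; apply: leq_trans (leq_maxr GST s) (leq_addr _ _).
case: hex => _ [_ _ hdel _ _].
have [t' [/andP [_ h1] h2]] := hdel i j s x ci cj ne hx.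
apply: (mono_S cj (leq_trans h1 hT)).
apply: (slot_S0 (hslot t' cj)); by rewrite /S0of /addm h2 orbT.
Qed.

Lemma first_time j (Pm : msgset n -> Prop) t : correct j ->
  (forall S S', sub S S' -> Pm S -> Pm S') -> ~ Pm (@mempty n) -> Pm (cS (st j t)) ->
  exists t0, Pm (S0of (prev_cfg st j t0) (inbox j t0)) /\ ~ Pm (cchk (prev_cfg st j t0)).
Proof.
move=> cj hm h0 hP; apply: NNPP => hno.
have hall : forall t0, ~ Pm (S0of (prev_cfg st j t0) (inbox j t0)).
  elim => [|s IH] hs; apply: hno.
    by exists 0; split.
  exists s.+1; split => //=; by rewrite (slot_chk (hslot s cj)).
apply: (hall t.+1); apply: hm hP => x hx /=; by rewrite /S0of /addm /= hx.
Qed.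

Lemma card_set0 (P : 'I_n -> bool) : (forall p, P p = false) -> #|[set p | P p]| = 0.
Proof. by move=> h; apply/eqP; rewrite cards_eq0; apply/eqP/setP => p; rewrite !inE h. Qed.

Lemma forward j k v t : correct j -> correct k -> 1 <= v -> Pv f (cS (st j t)) v ->
  exists t', Pv f (cS (st k t')) v.
Proof.
move=> cj ck hv [hN|[b [hb1 hb2]]].
- have [t0 [h1 h2]] := first_time (Pm := fun S => nullification f S v) cj
     (fun S S' hs => @null_mono n f S S' v hs) (ltac:(by rewrite /nullification card_set0 ?addn1)) hN.
  exists (maxn GST t0 + Delta); left.
  rewrite /nullification; apply: leq_trans (least_k_card h1) _.
  apply: subset_leq_card; apply/subsetP => p; rewrite !inE => hp.
  apply: (deliver cj ck _ (leqnn _)).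
  apply: (slot_sent1 (hslot t0 cj) h1 _ hp); exact/negP.
- have bnz : b != bgen by apply/eqP => e; move: hv; rewrite -hb2 e.
  have hb : 2 * f + 1 <= #|vsigners (cS (st j t)) b|.
    by move: hb1; rewrite /Mnot (negbTE bnz).
  have [t0 [h1 h2]] := first_time (Pm := fun S => 2 * f + 1 <= #|vsigners S b|) cj
     (fun S S' hs h => leq_trans h (subset_leq_card (vsigners_sub b hs)))
     (ltac:(by rewrite /vsigners card_set0 ?addn1)) hb.
  exists (maxn GST t0 + Delta); right; exists b; split => //.
  rewrite /Mnot (negbTE bnz) /=; apply: leq_trans (least_k_card h1) _.
  apply: subset_leq_card; apply/subsetP => p; rewrite !inE => hp.
  apply: (deliver cj ck _ (leqnn _)).
  apply: (slot_sent2 (hslot t0 cj) bnz h1 _ hp); exact/negP.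
Qed.


Lemma progress' k v t1 t2 : correct k -> v <= cv (st k t1) -> Pv f (cS (st k t2)) v ->
  exists t, v < cv (st k t).
Proof.
move=> ck h1 h2.
set T := maxn t1 t2.
have hT : v <= cv (st k T) := leq_trans h1 (mono_v ck (leq_maxl _ _)).
have hP : Pv f (cS (st k T)) v := Pv_mono (mono_S ck (leq_maxr _ _)) h2.
case: (ltngtP v (cv (st k T))) => [h|h|e]; first by exists T.
  by move: (leq_ltn_trans hT h); rewrite ltnn.
exists T.+1; apply: (slot_progress (hslot T.+1 ck)) => //=.
Qed.

Lemma adv_cond k t v : correct k -> 1 <= v -> v < cv (st k t) ->
  exists t', Pv f (cS (st k t')) v.
Proof.
move=> ck hv; elim: t => [|t IH] h.
  by exists 0; apply: (slot_advcond (hslot 0 ck)); rewrite hv h.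
case: (ltnP v (cv (st k t))) => [/IH //|h'].
by exists t.+1; apply: (slot_advcond (hslot t.+1 ck)); rewrite h h'.
Qed.

Lemma reach_enters k t w : correct k -> 2 <= w <= cv (st k t) ->
  exists t', w \in centered (st k t').
Proof.
move=> ck; elim: t => [|t IH] /andP [h1 h2].
  by exists 0; apply: (slot_ent (hslot 0 ck)); rewrite h1 h2.
case: (leqP w (cv (st k t))) => [h'|h']; first by apply: IH; rewrite h1 h'.
by exists t.+1; apply: (slot_ent (hslot t.+1 ck)); rewrite h' h2.
Qed.

Lemma timer_inv k t : correct k ->
  ctent (st k t) <= t /\ (2 * Delta <= t - ctent (st k t) -> flag (st k t)).
Proof.
move=> ck; elim: t => [|t [IH1 IH2]].
  apply: (slot_timer (hslot 0 ck)) => //=.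
apply: (slot_timer (hslot t.+1 ck)) => //=.
  exact: leq_trans IH1 (leqnSn t).
move=> h; apply: IH2; rewrite subSn // ltnS in h; exact: h.
Qed.

Lemma sent_step k t (prev : cfg n) : correct k ->
  slot f Delta H k t prev (inbox k t) (st k t) ->
  (cnull prev -> exists s, s <= t /\ csent (st k s) (Null k (cv prev))) ->
  (forall b, cnot prev = Some b -> bview b = cv prev /\ exists s, s <= t /\ csent (st k s) (Vote k b)) ->
  (cnull (st k t) -> exists s, s <= t /\ csent (st k s) (Null k (cv (st k t)))) /\
  (forall b, cnot (st k t) = Some b -> bview b = cv (st k t) /\ exists s, s <= t /\ csent (st k s) (Vote k b)).
Proof.
move=> ck hs h1 h2.
case: (eqVneq (cv (st k t)) (cv prev)) => [e|ne].
- have [_ _ _ g1 g2] := slot_same hs e.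
  rewrite e; split.
    by move/g1 => [/h1 //|hx]; exists t.
  move=> b /g2 [/h2 //|[hx hb]]; split => //; by exists t.
- have [_ g1 g2] := slot_diff hs (elimN eqP ne).
  split; first by move/g1 => hx; exists t.
  move=> b /g2 [hx hb]; split => //; by exists t.
Qed.

Lemma sent_inv k t : correct k ->
  (cnull (st k t) -> exists s, s <= t /\ csent (st k s) (Null k (cv (st k t)))) /\
  (forall b, cnot (st k t) = Some b -> bview b = cv (st k t) /\ exists s, s <= t /\ csent (st k s) (Vote k b)).
Proof.
move=> ck; elim: t => [|t [IH1 IH2]].
  by apply: (sent_step ck (hslot 0 ck)).
apply: (sent_step ck (hslot t.+1 ck)) => /=.
  by move/IH1 => [s [hs hx]]; exists s; split => //; apply: leq_trans hs _.
by move=> b /IH2 [hb [s [hs hx]]]; split => //; exists s; split => //; apply: leq_trans hs _.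
Qed.

Lemma persist k v T t t' : correct k -> (forall u, T <= u -> cv (st k u) = v) ->
  T <= t -> t <= t' ->
  [/\ ctent (st k t') = ctent (st k t), (cnull (st k t) -> cnull (st k t')) &
      (forall b, cnot (st k t) = Some b -> cnot (st k t') = Some b)].
Proof.
move=> ck hv hT; elim: t' => [|t' IH]; rewrite leq_eqVlt => /orP [/eqP->|h] //.
have [e1 e2 e3] := IH h.
have hs := hslot t'.+1 ck.
have [g1 g2 g3 _ _] := slot_same hs (ltac:(rewrite /= !hv //; first [exact: leq_trans hT h | exact: leq_trans hT (ltnW h)])).
split; first by rewrite /= in g1; rewrite g1.
  by move/e2/g2.
by move=> b /e3/g3.
Qed.

Lemma fin_bound (Q : 'I_n -> nat -> Prop) :
  (forall k t t', correct k -> t <= t' -> Q k t -> Q k t') ->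
  (forall k, correct k -> exists t, Q k t) -> exists T, forall k, correct k -> Q k T.
Proof.
move=> hm he.
have : forall s : seq 'I_n, exists T, forall k, k \in s -> correct k -> Q k T.
  elim => [|a s [T IH]]; first by exists 0.
  case ca: (correct a).
    have [ta hta] := he a ca.
    exists (maxn T ta) => k; rewrite inE => /orP [/eqP -> _|hk ck].
      exact: hm ca (leq_maxr _ _) hta.
    exact: hm ck (leq_maxl _ _) (IH k hk ck).
  exists T => k; rewrite inE => /orP [/eqP ->|hk ck]; first by rewrite ca.
  exact: IH.
move/(_ (enum 'I_n)) => [T hT]; exists T => k ck; apply: hT => //; by rewrite mem_enum.
Qed.

Lemma stuck v : 1 <= v -> (forall k, correct k -> exists t, v <= cv (st k t)) ->
  (forall k t, correct k -> ~ Pv f (cS (st k t)) v) -> False.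
Proof.
move=> hv IH noP.
have le_v : forall k t, correct k -> cv (st k t) <= v.
  move=> k t ck; rewrite leqNgt; apply/negP => h.
  have [t' ht'] := adv_cond ck hv h; exact: noP ht'.
have eq_v : forall k, correct k -> exists T, forall u, T <= u -> cv (st k u) = v.
  move=> k ck; have [T hT] := IH k ck; exists T => u hu.
  apply/eqP; rewrite eqn_leq le_v //; exact: leq_trans hT (mono_v ck hu).
have fl : forall k, correct k -> exists T, forall u, T <= u -> flag (st k u) /\ cv (st k u) = v.
  move=> k ck; have [T hT] := eq_v k ck.
  exists (T + 2 * Delta) => u hu.
  have hTu : T <= u := leq_trans (leq_addr _ _) hu.
  split; last exact: hT.
  have [_ p2 p3] := persist ck hT (leq_addr (2 * Delta) T) hu.
  have [_ c2] := timer_inv (T + 2 * Delta) ck.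
  have [d1 _] := timer_inv T ck.
  have [q1 _ _] := persist ck hT (leqnn T) (leq_addr (2 * Delta) T).
  have fT : flag (st k (T + 2 * Delta)) by apply: c2; rewrite q1; lia.
  case: fT => [hn'|[b hb]]; [left; exact: p2 hn'| right; exists b; exact: p3 _ hb].
have [T1 hT1] := fin_bound (Q := fun k u => forall u', u <= u' -> flag (st k u') /\ cv (st k u') = v)
  (fun k t t' ck htt' hq u' hu' => hq u' (leq_trans htt' hu'))
  (fun k ck => let: ex_intro T hT := fl k ck in ex_intro _ T hT).
set T2 := maxn GST T1 + Delta.
have hT12 : T1 <= T2 by rewrite /T2; lia.
have recv : forall p j, correct p -> correct j ->
   (cnull (st p T1) -> cS (st j T2) (Null p v)) /\
   (forall b, cnot (st p T1) = Some b -> bview b = v /\ cS (st j T2) (Vote p b)).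
  move=> p j cp cj; have [s1 s2] := sent_inv T1 cp.
  have ev : cv (st p T1) = v by exact: (hT1 p cp T1 (leqnn _)).2.
  split.
    move/s1 => [s [hs hx]]; rewrite ev in hx; apply: (deliver cp cj hx); rewrite /T2; lia.
  move=> b /s2 [hb [s [hs hx]]]; rewrite ev in hb; split => //.
  apply: (deliver cp cj hx); rewrite /T2; lia.
set K := [set p | correct p].
have hK : n - f <= #|K|.
  have := cardsC K; rewrite card_ord.
  have -> : ~: K = [set p | ~~ correct p] by apply/setP => p; rewrite !inE.
  lia.
have nullT2 : forall j, correct j -> cnull (st j T2.+1).
  move=> j cj; have [[hfl|[bj hbj]] hvj] := hT1 j cj T2 hT12.
    have hv' : forall u, T1 <= u -> cv (st j u) = v by move=> u hu; exact: (hT1 j cj u hu).2.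
    have [_ g _] := persist cj hv' hT12 (leqnSn T2); exact: g hfl.
  have [_ sb] := sent_inv T2 cj.
  have [hbv _] := sb bj hbj; rewrite hvj in hbv.
  set X := [set p | ~~ cnull (st p T1) && (cnot (st p T1) == Some bj)].
  case: (leqP (2 * f + 1) #|K :&: X|) => hC.
    exfalso; apply: (noP j T2 cj); right; exists bj; split => //.
    rewrite /Mnot; apply/orP; right; apply: leq_trans hC _; apply: subset_leq_card.
    apply/subsetP => p; rewrite !inE => /andP [cp /andP [_ /eqP hp]].
    exact: ((recv p j cp cj).2 bj hp).2.
  have hsplit := cardsID X K.
  have hP : 2 * f + 1 <= #|K :\: X| by lia.
  apply: (slot_step8 (hslot T2.+1 cj) (b := bj) (P := K :\: X)) => //=.
    by rewrite (hT1 j cj T2.+1 (leq_trans hT12 (leqnSn _))).2 hvj.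
  move=> p; rewrite !inE negb_and negbK => /andP [hnX cp].
  case hc: (cnull (st p T1)).
    by left; rewrite hvj; exact: (recv p j cp cj).1 hc.
  move: hnX; rewrite hc /= => hne.
  have [[hc'|[b' hb']] _] := hT1 p cp T1 (leqnn _); first by rewrite hc in hc'.
  right; exists b'; have [x1 x2] := (recv p j cp cj).2 b' hb'; split => //.
    by rewrite hvj.
  by move=> e; move: hne; rewrite hb' e eqxx.
have sentN : forall j, correct j -> exists s, s <= T2.+1 /\ csent (st j s) (Null j v).
  move=> j cj; have [s1 _] := sent_inv T2.+1 cj.
  have ev : cv (st j T2.+1) = v by exact: (hT1 j cj T2.+1 (leq_trans hT12 (leqnSn _))).2.
  by rewrite -ev; apply: s1; apply: nullT2.
set T3 := maxn GST T2.+1 + Delta.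
have [q] : exists q, q \in K by apply/set0Pn; rewrite -card_gt0; lia.
rewrite inE => cq.
apply: (noP q T3 cq); left; rewrite /nullification.
apply: (@leq_trans (n - f)); first lia.
apply: leq_trans hK _; apply: subset_leq_card; apply/subsetP => p; rewrite !inE => cp.
have [s [hs hx]] := sentN p cp.
apply: (deliver cp cq hx); rewrite /T3; lia.
Qed.

Lemma reach v : 1 <= v -> forall k, correct k -> exists t, v <= cv (st k t).
Proof.
elim: v => [//|v IH] _ k ck.
case: (posnP v) => [->|hv]; first by exists 0; exact: cv_pos.
have IH' := IH hv.
case: (classic (exists j t, correct j /\ Pv f (cS (st j t)) v)) => [[j [t [cj hP]]]|hno].
- have [t' ht'] := forward cj ck hv hP.
  have [t1 ht1] := IH' k ck.
  exact: progress' ck ht1 ht'.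
- exfalso; apply: (stuck hv IH') => k' t ck' hP; apply: hno; by exists k', t.
Qed.

End Exec.

Theorem lemma5 (n f Delta GST : nat) (H : block -> nat) (correct : pred 'I_n)
    (inbox : 'I_n -> nat -> msgset n) (st : 'I_n -> nat -> cfg n) :
  5 * f + 1 <= n ->
  0 < Delta ->
  #|[set p | ~~ correct p]| <= f ->
  execution f Delta GST H correct inbox st ->
  forall (i : 'I_n) (v : nat), correct i -> 1 <= v -> enters st i v.
Proof.
move=> hn hD hf hex i v ci hv.
case: (eqVneq v 1) => [->|ne]; first by left.
right.
have [t ht] := reach hn hD hf hex hv ci.
have [t' h] := reach_enters hex (t := t) (w := v) ci (ltac:(rewrite ht andbT; lia)).
by exists t'.
Qed.
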